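(* Let $\mathbf{C}$ be a category of $\mathbf{FI}$ type and $M_\bullet$ a finitely generated $\mathbf{C}$-module over $\mathbb{C}$. Then there exists a set $X$ of objects which is upward closed (if $c\in X$ and $c\leq d$ then $d\in X$) and cofinal (every object is $\leq$ some element of $X$) such that for every $c\in X$ and $d\geq c$ the induced map of coinvariants $M_c/G_c\to M_d/G_d$ is an isomorphism. More generally, for every free $\mathbf{C}$-module $F_\bullet$ the coinvariants of $F\otimes M$ stabilize in the same sense; in particular the spaces $\mathrm{Hom}_{G_c}(F_c,M_c)$ stabilize in the same sense.
   Context: A category $\mathbf{C}$ is of $\mathbf{FI}$ type if: (1) all Hom-sets are finite; (2) every morphism is a monomorphism and every endomorphism is an isomorphism; (3) for all objects $c,d$ the group $G_d=\mathrm{Aut}_{\mathbf{C}}(d)$ acts transitively on $\mathrm{Hom}_{\mathbf{C}}(c,d)$; (4) for every $d$ only finitely many isomorphism classes of $c$ have $\mathrm{Hom}(c,d)\neq\emptyset$; (5) every pair $c_1\to d\leftarrow c_2$ has a pullback, and every pair $f_i:p\to c_i$ has a weak push-out, i.e. a commutative pullback square $g_i:c_i\to d$ such that for every other pullback square $h_i:c_i\to z$ with $h_1f_1=h_2f_2$ there is a unique $h:d\to z$ with $hg_i=h_i$. Write $c\leq d$ if $\mathrm{Hom}(c,d)\neq\emptyset$; $G_c=\mathrm{Aut}(c)$. A $\mathbf{C}$-module is a functor to complex vector spaces; finitely generated means some finite set of elements lies in no proper submodule. For any $\mathbf{C}$-module the coinvariants $M_c/G_c$ form a $\mathbf{C}$-module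 (the map $M_c/G_c\to M_d/G_d$ is independent of the chosen morphism $c\to d$). For a finite-dimensional $G_c$-representation $V$, $\mathrm{Ind}_c(V)$ is $d\mapsto\mathbb{C}[\mathrm{Hom}(c,d)]\otimes_{\mathbb{C}[G_c]}V$; a free module is a finite direct sum of these. Tensor products are pointwise. The spaces $\mathrm{Hom}_{G_c}(F_c,M_c)$ are identified with $(F^*_c\otimes M_c)/G_c$, where $F^*=\bigoplus\mathrm{Ind}_{c_i}(V_i^* )$ for $F=\bigoplus\mathrm{Ind}_{c_i}(V_i)$. *)

(* Defs.v *)
From HB Require Import structures.
From mathcomp Require Import all_boot all_algebra.
From mathcomp Require Import reals complex.
From Stdlib Require List.
Set Implicit Arguments. Unset Strict Implicit. Unset Printing Implicit Defensive.
Import GRing.Theory.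
Local Open Scope ring_scope.

Record category := Category {
  Obj :> Type;
  Hom : Obj -> Obj -> finType;
  idm : forall c, Hom c c;
  comp : forall a b c, Hom b c -> Hom a b -> Hom a c;
  comp1m : forall a b (f : Hom a b), comp (idm b) f = f;
  compm1 : forall a b (f : Hom a b), comp f (idm a) = f;
  compA : forall a b c d (f : Hom c d) (g : Hom b c) (h : Hom a b),
      comp f (comp g h) = comp (comp f g) h }.

Section Cat.
Variable C : category.

Definition is_iso (a b : C) (f : Hom a b) : Prop :=
  exists g : Hom b a, comp g f = idm a /\ comp f g = idm b.

Definition iso_obj (a b : C) : Prop := exists f : Hom a b, is_iso f.

Definition leC (c d : C) : Prop := inhabited (Hom c d).

Definition is_pullback (p c1 c2 d : C) (f1 : Hom p c1) (f2 : Hom p c2)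
    (g1 : Hom c1 d) (g2 : Hom c2 d) : Prop :=
  comp g1 f1 = comp g2 f2 /\
  forall (q : C) (u1 : Hom q c1) (u2 : Hom q c2), comp g1 u1 = comp g2 u2 ->
    exists! u : Hom q p, comp f1 u = u1 /\ comp f2 u = u2.

Definition FI_type : Prop :=
  (* (1) finiteness of Hom-sets: built into [Hom : _ -> _ -> finType] *)
  (forall (a b c : C) (f : Hom b c) (g h : Hom a b), comp f g = comp f h -> g = h) /\
  (forall (c : C) (f : Hom c c), is_iso f) /\
  (forall (c d : C) (f1 f2 : Hom c d), exists g : Hom d d, is_iso g /\ comp g f1 = f2) /\
  (forall d : C, exists s : seq C,
     forall c : C, leC c d -> exists c', List.In c' s /\ iso_obj c c') /\
  (forall (c1 c2 d : C) (g1 : Hom c1 d) (g2 : Hom c2 d),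
     exists (p : C) (f1 : Hom p c1) (f2 : Hom p c2), is_pullback f1 f2 g1 g2) /\
  (forall (p c1 c2 : C) (f1 : Hom p c1) (f2 : Hom p c2),
     exists (d : C) (g1 : Hom c1 d) (g2 : Hom c2 d),
       is_pullback f1 f2 g1 g2 /\
       forall (z : C) (h1 : Hom c1 z) (h2 : Hom c2 z), is_pullback f1 f2 h1 h2 ->
         exists! h : Hom d z, comp h g1 = h1 /\ comp h g2 = h2).

End Cat.

Record Cmodule (K : fieldType) (C : category) := Cmod {
  Mob : C -> lmodType K;
  act : forall (c d : C), Hom c d -> Mob c -> Mob d;
  act_linear : forall c d (f : Hom c d) (a : K) (x y : Mob c),
      act f (a *: x + y) = a *: act f x + act f y;
  act_id : forall c (x : Mob c), act (idm c) x = x;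
  act_comp : forall a b c (f : Hom b c) (g : Hom a b) (x : Mob a),
      act (comp f g) x = act f (act g x) }.
Arguments act {K C} _ {c d}.

Section Modules.
Variables (K : fieldType) (C : category).

Definition is_submodule (M : Cmodule K C) (S : forall c : C, Mob M c -> Prop) : Prop :=
  (forall c, S c 0) /\
  (forall c (a : K) (x y : Mob M c), S c x -> S c y -> S c (a *: x + y)) /\
  (forall c d (f : Hom c d) (x : Mob M c), S c x -> S d (act M f x)).

Definition fin_gen (M : Cmodule K C) : Prop :=
  exists gens : seq {c : C & Mob M c},
    forall S, is_submodule S ->
      (forall p, List.In p gens -> S (tag p) (tagged p)) ->
      forall c (x : Mob M c), S c x.

Definition inspan (V : lmodType K) (P : V -> Prop) (v : V) : Prop :=
  exists s : seq (K * V), (forall p, List.In p s -> P p.2) /\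
    v = \sum_(p <- s) p.1 *: p.2.

(* phi : V -> W (linear, mapping span RV into span RW) induces a bijection
   V / span RV -> W / span RW *)
Definition quot_bij (V W : lmodType K) (RV : V -> Prop) (RW : W -> Prop)
    (phi : V -> W) : Prop :=
  (forall v, inspan RW (phi v) -> inspan RV v) /\
  (forall w, exists v, inspan RW (w - phi v)).

Definition stabilizes (Q : C -> lmodType K) (Rel : forall c, Q c -> Prop)
    (push : forall c d : C, Hom c d -> Q c -> Q d) : Prop :=
  exists X : C -> Prop,
    (forall c d : C, X c -> leC c d -> X d) /\
    (forall c : C, exists d, X d /\ leC c d) /\
    (forall (c d : C) (f : Hom c d), X c ->
       quot_bij (Rel c) (Rel d) (push c d f)).

(* generators of the kernel of M_c -> M_c / G_c *)
Definition coinv_rel (M : Cmodule K C) (c : C) (v : Mob M c) : Prop :=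
  exists g : Hom c c, is_iso g /\ exists m : Mob M c, v = act M g m - m.

(* ---------- free modules F = (+)_i Ind_{c_i}(V_i), V_i = K^(n_i) ---------- *)
Record freeData := FreeData {
  nF : nat;
  cs : 'I_nF -> C;
  dims : 'I_nF -> nat;
  rho : forall i : 'I_nF, Hom (cs i) (cs i) -> 'M[K]_(dims i);
  rho_id : forall i, @rho i (idm (cs i)) = 1%:M;
  rho_comp : forall i (g h : Hom (cs i) (cs i)), @rho i (comp g h) = @rho i g *m @rho i h }.

Section Tensor.
Variables (F : freeData) (M : Cmodule K C).

Definition fam (d : C) (i : 'I_(nF F)) : finType :=
  (Hom (cs i) d * 'I_(dims i))%type.

Definition idx (d : C) : finType := {i : 'I_(nF F) & fam d i}.

(* C[Hom(c_i,d)] (x) K^(n_i) (x) M_d, summed over i, identified with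
   M_d-valued functions on the finite set of triples (i, f, j):
   x corresponds to  sum_{(i,f,j)} e_f (x) e_j (x) x(i,f,j). *)
Definition Tsp (d : C) : lmodType K := {ffun idx d -> Mob M d}.

Definition elem (d : C) (i : 'I_(nF F)) (f : Hom (cs i) d) (v : 'cV[K]_(dims i))
    (m : Mob M d) : Tsp d :=
  [ffun p : idx d => \sum_(j < dims i)
      v j 0 *: (if p == Tagged (fam d) (f, j) then m else 0)].

(* generators of the kernel of  C[Hom]⊗V⊗M_d ->> (Ind V ⊗ M)_d / G_d :
   balancing over C[G_{c_i}] in the tensor product C[Hom(c_i,d)] (x)_{C[G_{c_i}]} V_i,
   and the G_d-coinvariant relations for the diagonal action. *)
Definition tens_rel (d : C) (x : Tsp d) : Prop :=
  (exists (i : 'I_(nF F)) (f : Hom (cs i) d) (g : Hom (cs i) (cs i))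
          (v : 'cV[K]_(dims i)) (m : Mob M d),
     is_iso g /\ x = elem (comp f g) v m - elem f (rho g *m v) m) \/
  (exists (h : Hom d d) (i : 'I_(nF F)) (f : Hom (cs i) d)
          (v : 'cV[K]_(dims i)) (m : Mob M d),
     is_iso h /\ x = elem (comp h f) v (act M h m) - elem f v m).

Definition mapidx (c d : C) (phi : Hom c d) (q : idx c) : idx d :=
  Tagged (fam d) (comp phi (tagged q).1, (tagged q).2).

Definition push (c d : C) (phi : Hom c d) (x : Tsp c) : Tsp d :=
  [ffun p : idx d => \sum_(q : idx c | mapidx phi q == p) act M phi (x q)].

End Tensor.
End Modules.

(* Main.v *)
Require Import Defs.
From HB Require Import structures.
From mathcomp Require Import all_boot all_algebra.
From mathcomp Require Import reals complex.
From Stdlib Require Import ClassicalEpsilon.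
From mathcomp Require Import zify.
Set Implicit Arguments. Unset Strict Implicit. Unset Printing Implicit Defensive.
Set Warnings "-notation-overridden,-ambiguous-paths".
Import GRing.Theory.
Local Open Scope ring_scope.

Notation HomC := Defs.Hom.
Notation compC := Defs.comp.

Section Span.
Variables (K : fieldType) (V : lmodType K).
Implicit Types (P Q : V -> Prop).

Lemma inspan0 P : inspan P 0.
Proof. by exists [::]; split=> //; rewrite big_nil. Qed.

Lemma inspan1 P v : P v -> inspan P v.
Proof.
move=> Pv; exists [:: (1, v)]; split; first by move=> p [<-|].
by rewrite big_cons big_nil scale1r addr0.
Qed.

Lemma inspan_lin P a x y : inspan P x -> inspan P y -> inspan P (a *: x + y).
Proof.
move=> [s [Ps ->]] [t [Pt ->]].
exists ([seq (a * p.1, p.2) | p <- s] ++ t); split.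
  move=> p /(List.in_app_or _ _ _) [|/Pt //].
  by move=> /(List.in_map_iff _ _ _) [q [<- /Ps]].
rewrite big_cat big_map /= scaler_sumr; congr (_ + _).
by apply: eq_bigr => p _; rewrite scalerA.
Qed.

Lemma inspanD P x y : inspan P x -> inspan P y -> inspan P (x + y).
Proof. by move=> hx hy; have := inspan_lin 1 hx hy; rewrite scale1r. Qed.

Lemma inspanZ P a x : inspan P x -> inspan P (a *: x).
Proof. by move=> hx; have := inspan_lin a hx (inspan0 P); rewrite addr0. Qed.

Lemma inspanN P x : inspan P x -> inspan P (- x).
Proof. by move=> hx; have := inspanZ (-1) hx; rewrite scaleN1r. Qed.

Lemma inspanB P x y : inspan P x -> inspan P y -> inspan P (x - y).
Proof. by move=> hx hy; apply: inspanD hx (inspanN hy). Qed.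

Lemma inspan_sum P (I : Type) (r : seq I) (Q : pred I) (F : I -> V) :
  (forall i, Q i -> inspan P (F i)) -> inspan P (\sum_(i <- r | Q i) F i).
Proof.
move=> h; elim: r => [|i r IH]; first by rewrite big_nil; apply: inspan0.
rewrite big_cons; case: ifP => Qi //; exact: inspanD (h _ Qi) IH.
Qed.

Lemma inspan_trans P x : inspan (inspan P) x -> inspan P x.
Proof.
move=> [s [Ps ->]]; elim: s Ps => [|p s IH] Ps; first by rewrite big_nil; apply: inspan0.
rewrite big_cons; apply: inspanD; first by apply: inspanZ; apply: Ps; left.
by apply: IH => q hq; apply: Ps; right.
Qed.

Lemma inspan_mono P Q x : (forall v, P v -> Q v) -> inspan P x -> inspan Q x.
Proof. move=> h [s [Ps ->]]; exists s; split=> // p hp; exact: h (Ps p hp). Qed.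

End Span.

Lemma inspan_map (K : fieldType) (V W : lmodType K) (P : V -> Prop) (Q : W -> Prop)
  (L : V -> W) :
  (forall a x y, L (a *: x + y) = a *: L x + L y) ->
  (forall v, P v -> inspan Q (L v)) -> forall x, inspan P x -> inspan Q (L x).
Proof.
move=> Ll h x [s [Ps ->]].
have L0 : L 0 = 0.
  have e := Ll 1 0 0; rewrite !scale1r addr0 in e.
  by apply: (@addrI _ (L 0)); rewrite addr0 -e.
elim: s Ps => [|p s IH] Ps; first by rewrite big_nil L0; apply: inspan0.
rewrite big_cons Ll; apply: inspan_lin; first by apply: h; apply: Ps; left.
by apply: IH => q hq; apply: Ps; right.
Qed.

Local Close Scope ring_scope.
Definition asb (P : Prop) : bool := if excluded_middle_informative P then true else false.
Lemma asbP (P : Prop) : reflect P (asb P).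
Proof. by rewrite /asb; case: excluded_middle_informative => h; constructor. Qed.

Definition maxP (B : nat) (P : nat -> Prop) : nat := \max_(k < B.+1 | asb (P k)) k.

Lemma maxP_spec B (P : nat -> Prop) k0 : P k0 -> (forall k, P k -> k <= B) ->
  P (maxP B P) /\ (forall k, P k -> k <= maxP B P).
Proof.
move=> Pk0 hB; split.
  have Ak : 0 < #|[pred k : 'I_B.+1 | asb (P k)]|.
    have k0B : k0 < B.+1 by rewrite ltnS hB.
    by apply/card_gt0P; exists (Ordinal k0B); rewrite inE; apply/asbP.
  have [i0 Pi0 e] := eq_bigmax_cond (fun k : 'I_B.+1 => nat_of_ord k) Ak.
  rewrite /maxP e; exact/asbP.
move=> k Pk; have kB : k < B.+1 by rewrite ltnS hB.
exact: (@leq_bigmax_cond _ (fun k : 'I_B.+1 => asb (P k)) (fun k => nat_of_ord k) (Ordinal kB) (introT (asbP _) Pk)).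
Qed.

Local Open Scope ring_scope.

Lemma leC_trans (C : category) (a b c : C) : leC a b -> leC b c -> leC a c.
Proof. by move=> [f] [g]; constructor; exact: compC g f. Qed.

Lemma leC_refl (C : category) (a : C) : leC a a.
Proof. by constructor; exact: idm a. Qed.

Section Abstract.
Variables (K : fieldType) (C : category) (Q : C -> lmodType K) (Rel : forall c, Q c -> Prop)
 (push : forall c d : C, HomC c d -> Q c -> Q d).
Hypothesis Hlin : forall c d (f : HomC c d) a x y,
  push f (a *: x + y) = a *: push f x + push f y.
Hypothesis Hrel : forall c d (f : HomC c d) v, @Rel c v -> inspan (@Rel d) (push f v).
Variables (I : finType) (avail : I -> C -> bool) (y : I -> forall d, Q d).
Hypothesis Havail : forall k c d, avail k c -> leC c d -> avail k d.
Hypothesis Hcompat : forall k c d (f : HomC c d), avail k c ->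
  inspan (@Rel d) (y k d - push f (y k c)).
Definition Gen d (u : Q d) := @Rel d u \/ exists k, avail k d /\ inspan (@Rel d) (y k d - u).
Hypothesis Hspan : forall d w, inspan (@Gen d) w.

Section PushLemmas.
Variables (c d : C) (f : HomC c d).
Lemma push0 : push f 0 = 0.
Proof.
have e := Hlin f 1 0 0; rewrite !scale1r addr0 in e.
by apply: (@addrI _ (push f 0)); rewrite addr0 -e.
Qed.
Lemma pushD x z : push f (x + z) = push f x + push f z.
Proof. by have := Hlin f 1 x z; rewrite !scale1r. Qed.
Lemma pushZ a x : push f (a *: x) = a *: push f x.
Proof. by have := Hlin f a x 0; rewrite !addr0 push0 addr0. Qed.
Lemma pushB x z : push f (x - z) = push f x - push f z.
Proof. by rewrite -scaleN1r addrC Hlin scaleN1r addrC. Qed.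
Lemma push_sum (J : Type) (r : seq J) (P : pred J) (F : J -> Q c) :
  push f (\sum_(j <- r | P j) F j) = \sum_(j <- r | P j) push f (F j).
Proof.
elim: r => [|j r IH]; first by rewrite !big_nil push0.
by rewrite !big_cons; case: ifP => // _; rewrite pushD IH.
Qed.
Lemma push_span v : inspan (@Rel c) v -> inspan (@Rel d) (push f v).
Proof. exact: (inspan_map (Hlin f) (@Hrel c d f)). Qed.
End PushLemmas.

Notation N := #|I|.
Notation ys d a := (\sum_(k | avail k d) (a : 'rV[K]_N) 0 (enum_rank k) *: y k d).

Definition Pd d (a : 'rV[K]_N) : Prop :=
  (forall k, ~~ avail k d -> a 0 (enum_rank k) = 0) /\ inspan (@Rel d) (ys d a).

Lemma ysD d al a b : ys d (al *: a + b) = al *: ys d a + ys d b.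
Proof.
rewrite scaler_sumr -big_split; apply: eq_bigr => k _.
by rewrite !mxE scalerDl scalerA.
Qed.

Lemma ys0 d : ys d 0 = 0.
Proof. by apply: big1 => k _; rewrite mxE scale0r. Qed.

Lemma Pd_lin d al a b : Pd d a -> Pd d b -> Pd d (al *: a + b).
Proof.
move=> [sa ha] [sb hb]; split.
  by move=> k nk; rewrite !mxE sa // sb // mulr0 addr0.
by rewrite ysD; apply: inspan_lin.
Qed.

Lemma Pd0 d : Pd d 0.
Proof. by split; [move=> k _; rewrite mxE | rewrite ys0; apply: inspan0]. Qed.

Lemma Pd_row d (A : 'M[K]_N) v : (forall u, (u <= A)%MS -> Pd d u) -> Pd d v ->
  forall u : 'rV_N, (u <= A + v)%MS -> Pd d u.
Proof.
move=> hA hv u /sub_addsmxP [[u1 u2] /= ->].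
rewrite [u2]mx11_scalar mul_scalar_mx addrC.
by apply: Pd_lin => //; apply: hA; apply: submxMl.
Qed.

Lemma sum_rel c d (f : HomC c d) (a : 'rV_N) :
  (forall k, ~~ avail k c -> a 0 (enum_rank k) = 0) ->
  inspan (@Rel d) (ys d a - push f (ys c a)).
Proof.
move=> sa; have le : leC c d by constructor.
have -> : ys d a = \sum_(k | avail k c) a 0 (enum_rank k) *: y k d.
  rewrite (big_mkcond (fun k => avail k d)) (big_mkcond (fun k => avail k c)) /=.
  apply: eq_bigr => k _; case: (boolP (avail k c)) => hc.
    by rewrite (Havail hc le).
  by rewrite sa // scale0r; case: ifP.
rewrite push_sum -sumrB; apply: inspan_sum => k hk.
by rewrite pushZ -scalerBr; apply: inspanZ; apply: Hcompat.
Qed.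

Lemma Pd_mono c d (f : HomC c d) a : Pd c a -> Pd d a.
Proof.
move=> [sa ha]; split.
  move=> k nd; apply: sa; apply: contra nd => hc; exact: Havail hc (inhabits f).
rewrite -(subrK (push f (ys c a)) (ys d a)).
by apply: inspanD; [apply: sum_rel | apply: push_span].
Qed.

Definition rhoP d k := exists A : 'M[K]_N, \rank A = k /\
  forall u : 'rV_N, (u <= A)%MS -> Pd d u.
Definition rho d := maxP N (rhoP d).

Lemma rho_spec d : rhoP d (rho d) /\ forall k, rhoP d k -> (k <= rho d)%N.
Proof.
apply: (@maxP_spec N (rhoP d) 0).
  exists 0; rewrite mxrank0; split=> // u; rewrite submx0 => /eqP ->; exact: Pd0.
by move=> k [A [<- _]]; apply: rank_leq_col.
Qed.

Lemma rho_mono c d : leC c d -> (rho c <= rho d)%N.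
Proof.
move=> [f]; have [[A [rA hA]] _] := rho_spec c.
have [_ ->] := rho_spec d => //; exists A; split=> // u /hA; exact: Pd_mono.
Qed.

Lemma rho_eq c d (f : HomC c d) v : rho c = rho d -> Pd d v -> Pd c v.
Proof.
move=> e hv; have [[A [rA hA]] _] := rho_spec c.
have hB : forall u : 'rV_N, (u <= A + v)%MS -> Pd d u.
  by apply: Pd_row => // u /hA; apply: Pd_mono.
have [_ mx] := rho_spec d.
have rB : (\rank (A + v)%MS <= \rank A)%N by rewrite rA e; apply: mx; exists (A + v)%MS.
have sAB : (A <= A + v)%MS by apply: addsmxSl.
have := mxrank_leqif_sup sAB; move=> /leqifP; case: ifP => [hBA _|_ hlt].
  apply: hA; apply: submx_trans hBA; exact: addsmxSr.
by move: (leq_trans hlt rB); rewrite ltnn.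
Qed.

Definition sigma d := #|[pred k | avail k d]|.
Lemma sigma_mono c d : leC c d -> (sigma c <= sigma d)%N.
Proof.
move=> le; apply: subset_leq_card; apply/subsetP => k; rewrite !inE => h.
exact: Havail h le.
Qed.

Definition mu d := sigma d + rho d.
Lemma mu_mono c d : leC c d -> (mu c <= mu d)%N.
Proof. by move=> le; apply: leq_add; [apply: sigma_mono | apply: rho_mono]. Qed.
Lemma mu_bound d : (mu d <= N + N)%N.
Proof.
apply: leq_add; first exact: max_card.
have [[A [<- _]] _] := rho_spec d; exact: rank_leq_col.
Qed.

Lemma span_decomp d w : exists a : 'rV_N, inspan (@Rel d) (w - ys d a).
Proof.
have [s [Ps ->]] := Hspan w.
elim: s Ps => [|p s IH] Ps.
  by exists 0; rewrite big_nil ys0 subrr; apply: inspan0.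
have [a' ha'] := IH (fun q hq => Ps q (or_intror hq)).
rewrite big_cons.
case: (Ps p (or_introl erefl)) => [hr | [k [ak hk]]].
  exists a'; rewrite -addrA; apply: inspanD => //; apply: inspanZ; exact: inspan1.
exists (p.1 *: delta_mx 0 (enum_rank k) + a'); rewrite ysD.
have -> : ys d (delta_mx 0 (enum_rank k)) = y k d.
  rewrite (bigD1 k) //= big1 ?addr0; first by rewrite mxE !eqxx scale1r.
  move=> j /andP [_ njk]; rewrite mxE eqxx /=.
  by rewrite (inj_eq enum_rank_inj) (negbTE njk) scale0r.
rewrite opprD addrACA -scalerBr; apply: inspanD => //.
apply: inspanZ; rewrite -opprB; exact: inspanN.
Qed.

Lemma abstract_stab : stabilizes Rel push.
Proof.
exists (fun c => forall d, leC c d -> mu d = mu c); split; [|split].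
- move=> c d Xc cd e de; rewrite (Xc e (leC_trans cd de)); by rewrite (Xc d cd).
- move=> c.
  have bnd : forall k, (exists d, leC c d /\ mu d = k) -> (k <= N + N)%N.
    by move=> k [d [_ <-]]; apply: mu_bound.
  have [[d [cd md]] mx] := @maxP_spec (N + N)
     (fun n => exists d, leC c d /\ mu d = n) (mu c)
     (ex_intro _ c (conj (leC_refl c) erefl)) bnd.
  exists d; split=> // e de; apply/eqP; rewrite eqn_leq; apply/andP; split.
    rewrite md; apply: mx; exists e; split=> //; exact: leC_trans de.
  exact: mu_mono.
- move=> c d f Xc.
  have le : leC c d by constructor.
  have emu := Xc d le; have s1 := sigma_mono le; have r1 := rho_mono le.
  have es : sigma c = sigma d.
    by apply/eqP; rewrite eqn_leq s1 /=; move: emu; rewrite /mu; lia.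
  have er : rho c = rho d by move: emu; rewrite /mu; lia.
  have adc : forall k, avail k d -> avail k c.
    have sub : [pred k | avail k c] \subset [pred k | avail k d].
      by apply/subsetP => k; rewrite !inE => h; exact: Havail h le.
    have := subset_leqif_card sub; move=> [_]; rewrite /sigma in es; rewrite es eqxx.
    by move=> /esym /subsetP h k hk; have := h k; rewrite !inE; apply.
  pose a' (a : 'rV[K]_N) := \row_j (if avail (enum_val j) c then a 0 j else 0).
  have a'E : forall a k, a' a 0 (enum_rank k) = if avail k c then a 0 (enum_rank k) else 0.
    by move=> a k; rewrite mxE enum_rankK.
  have a'S : forall a k, ~~ avail k c -> a' a 0 (enum_rank k) = 0.
    by move=> a k nk; rewrite a'E (negbTE nk).
  have ysc : forall a, ys c (a' a) = ys c a.
    by move=> a; apply: eq_bigr => k hk; rewrite a'E hk.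
  have ysd : forall a, ys d (a' a) = ys d a.
    by move=> a; apply: eq_bigr => k hk; rewrite a'E (adc k hk).
  split.
  + move=> v hv; have [a ha] := span_decomp v.
    have Pda : Pd d (a' a).
      split.
        by move=> k nd; apply: a'S; apply: contra nd => hc; exact: Havail hc le.
      rewrite -(subrK (push f (ys c (a' a))) (ys d (a' a))); apply: inspanD.
        by apply: sum_rel; apply: a'S.
      rewrite ysc; have -> : ys c a = v - (v - ys c a) by rewrite opprB addrC subrK.
      by rewrite pushB; apply: inspanB hv (push_span f ha).
    have [_ hc] := rho_eq f er Pda.
    rewrite -(subrK (ys c a) v); apply: inspanD => //; by rewrite -ysc.
  + move=> w; have [a ha] := span_decomp w.
    exists (ys c (a' a)).
    rewrite -(subrK (ys d a) w) -addrA; apply: inspanD => //.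
    rewrite -ysd; apply: sum_rel; exact: a'S.
Qed.

End Abstract.

Section Concrete.
Variables (K : fieldType) (C : category) (M : Cmodule K C).

Hypothesis trans : forall (c d : C) (f1 f2 : HomC c d),
  exists g : HomC d d, is_iso g /\ compC g f1 = f2.

Section ActLemmas.
Variables (c d : C) (f : HomC c d).
Lemma act0 : act M f 0 = 0.
Proof.
have e := act_linear (c0:=M) f 1 0 0; rewrite !scale1r addr0 in e.
by apply: (@addrI _ (act M f 0)); rewrite addr0 -e.
Qed.
Lemma actD x z : act M f (x + z) = act M f x + act M f z.
Proof. by have := act_linear (c0:=M) f 1 x z; rewrite !scale1r. Qed.
Lemma actZ a x : act M f (a *: x) = a *: act M f x.
Proof. by have := act_linear (c0:=M) f a x 0; rewrite !addr0 act0 addr0. Qed.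
Lemma actB x z : act M f (x - z) = act M f x - act M f z.
Proof. by rewrite -scaleN1r addrC act_linear scaleN1r addrC. Qed.
Lemma act_sum (J : Type) (r : seq J) (P : pred J) (F : J -> Mob M c) :
  act M f (\sum_(j <- r | P j) F j) = \sum_(j <- r | P j) act M f (F j).
Proof.
elim: r => [|j r IH]; first by rewrite !big_nil act0.
by rewrite !big_cons; case: ifP => // _; rewrite actD IH.
Qed.
End ActLemmas.

Lemma coinv_pair c d (g g1 : HomC c d) (x : Mob M c) :
  coinv_rel (M:=M) (act M g1 x - act M g x).
Proof.
have [h [ih e]] := trans g g1; exists h; split=> //; exists (act M g x).
by rewrite -e act_comp.
Qed.

Variable gens : seq {c : C & Mob M c}.
Hypothesis Hgen : forall S, is_submodule S ->
      (forall p, List.In p gens -> S (tag p) (tagged p)) ->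
      forall c (x : Mob M c), S c x.

Definition gen (k : 'I_(size gens)) := tnth (in_tuple gens) k.
Definition ck k := tag (gen k).
Definition xk k : Mob M (ck k) := tagged (gen k).

Lemma In_gen p : List.In p gens -> exists k, gen k = p.
Proof.
move=> hp.
have [n [hn e]] : exists n, (n < size gens)%N /\ nth p gens n = p.
  elim: gens hp => [|q s IH] //= [->|/IH [n [hn e]]]; first by exists 0%N.
  by exists n.+1.
by exists (Ordinal hn); rewrite /gen (tnth_nth p).
Qed.

Definition genimg d (u : Mob M d) := exists k (g : HomC (ck k) d), u = act M g (xk k).

Lemma M_span d (m : Mob M d) : inspan (@genimg d) m.
Proof.
apply: (Hgen (S := fun c x => inspan (@genimg c) x)).
  split; [move=> c; exact: inspan0 | split].
    by move=> c a x z; apply: inspan_lin.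
  move=> c e f x; apply: inspan_map; first exact: act_linear.
  move=> v [k [g ->]]; apply: inspan1; exists k, (compC f g); by rewrite act_comp.
move=> p /In_gen [k <-]; apply: inspan1; exists k, (idm _); by rewrite act_id.
Qed.

Definition av1 (k : 'I_(size gens)) (d : C) : bool := [pick g : HomC (ck k) d].
Definition y1 (k : 'I_(size gens)) (d : C) : Mob M d :=
  if [pick g : HomC (ck k) d] is Some g then act M g (xk k) else 0.

Lemma part1 : stabilizes (@coinv_rel _ C M) (fun c d f => act M f).
Proof.
apply: (@abstract_stab _ _ _ _ _ _ _ _ av1 y1).
- move=> c d f a x z; exact: act_linear.
- move=> c d f v [g [ig [m ->]]]; apply: inspan1.
  rewrite actB -act_comp.
  have [h [ih e]] := trans f (compC f g).
  by rewrite -e act_comp; exists h; split=> //; exists (act M f m).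
- move=> k c d; rewrite /av1; case: pickP => // g _ _ [f].
  by case: pickP => // /(_ (compC f g)).
- move=> k c d f; rewrite /av1 /y1; case: pickP => // g _ _.
  case: pickP => [g1 _|/(_ (compC f g)) //].
  by apply: inspan1; rewrite -act_comp; apply: coinv_pair.
- move=> d w; apply: inspan_mono (M_span w) => u [k [g ->]]; right; exists k.
  rewrite /av1 /y1; case: pickP => [g1 _|/(_ g) //]; split=> //.
  by apply: inspan1; apply: coinv_pair.
Qed.


Lemma pb_iso (p p' c1 c2 d : C) (f1 : HomC p c1) (f2 : HomC p c2) (g1 : HomC c1 d)
  (g2 : HomC c2 d) (s : HomC p p') (t : HomC p' p) :
  compC t s = idm p -> compC s t = idm p' ->
  is_pullback f1 f2 g1 g2 -> is_pullback (compC f1 t) (compC f2 t) g1 g2.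
Proof.
move=> ts st [cm un]; split; first by rewrite !Defs.compA cm.
move=> q u1 u2 e; have [u [[h1 h2] uq]] := un q u1 u2 e.
exists (compC s u); split.
  by split; rewrite -Defs.compA (Defs.compA t s u) ts Defs.comp1m.
move=> u' [e1 e2].
have -> : u = compC t u' by apply: uq; rewrite !Defs.compA.
by rewrite Defs.compA st Defs.comp1m.
Qed.

Variable F : freeData K C.

Lemma push_lin c d (f : HomC c d) a (x z : Tsp F M c) :
  push f (a *: x + z) = a *: push f x + push f z.
Proof.
apply/ffunP => p; rewrite !ffunE scaler_sumr -big_split; apply: eq_bigr => q _.
by rewrite !ffunE act_linear.
Qed.

Lemma elem_lin d (i : 'I_(nF F)) (f : HomC (cs i) d) v a (m m' : Mob M d) :
  elem f v (a *: m + m') = a *: elem f v m + elem (M:=M) f v m'.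
Proof.
apply/ffunP => p; rewrite !ffunE scaler_sumr -big_split; apply: eq_bigr => j _.
case: ifP => _ /=; last by rewrite !scaler0 addr0.
by rewrite scalerDr !scalerA mulrC.
Qed.

Lemma push_elem c d (phi : HomC c d) (i : 'I_(nF F)) (f : HomC (cs i) c) v (m : Mob M c) :
  push phi (elem f v m) = elem (compC phi f) v (act M phi m).
Proof.
apply/ffunP => p; rewrite !ffunE.
under eq_bigr => q _ do rewrite ffunE act_sum.
rewrite exchange_big /=; apply: eq_bigr => j _.
under eq_bigr => q _ do rewrite actZ.
rewrite -scaler_sumr; congr (_ *: _).
rewrite big_mkcond (bigD1 (Tagged (fam c) (f, j))) //= big1 ?addr0.
  rewrite eqxx [p == _]eq_sym; case: ifP => _ //; exact: act0.
move=> q nq; rewrite (negbTE nq) act0; by case: ifP.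
Qed.

Variable reps : C -> seq C.
Hypothesis Hreps : forall d c, leC c d -> exists c', List.In c' (reps d) /\ iso_obj c c'.
Variables (wD : forall p c1 c2 : C, HomC p c1 -> HomC p c2 -> C)
  (wG1 : forall p c1 c2 (f1 : HomC p c1) (f2 : HomC p c2), HomC c1 (wD f1 f2))
  (wG2 : forall p c1 c2 (f1 : HomC p c1) (f2 : HomC p c2), HomC c2 (wD f1 f2)).
Hypothesis Hw : forall p c1 c2 (f1 : HomC p c1) (f2 : HomC p c2),
  forall z (h1 : HomC c1 z) (h2 : HomC c2 z), is_pullback f1 f2 h1 h2 ->
         exists h : HomC (wD f1 f2) z, compC h (wG1 f1 f2) = h1 /\ compC h (wG2 f1 f2) = h2.
Hypothesis Hpb : forall (c1 c2 d : C) (g1 : HomC c1 d) (g2 : HomC c2 d),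
     exists (p : C) (f1 : HomC p c1) (f2 : HomC p c2), is_pullback f1 f2 g1 g2.

Definition pr (i : 'I_(nF F)) (r : 'I_(size (reps (cs i)))) : C := nth (cs i) (reps (cs i)) r.

Definition Tau := {i : 'I_(nF F) & {j : 'I_(dims i) & {k : 'I_(size gens) &
  {r : 'I_(size (reps (cs i))) & (HomC (pr r) (cs i) * HomC (pr r) (ck k))%type}}}}.


Definition avT (t : Tau) (d : C) : bool :=
  let: existT i (existT j (existT k (existT r (u1, u2)))) := t in
  [pick h : HomC (wD u1 u2) d].

Definition yT (t : Tau) (d : C) : Tsp F M d :=
  let: existT i (existT j (existT k (existT r (u1, u2)))) := t in
  if [pick h : HomC (wD u1 u2) d] is Some h then
    elem (compC h (wG1 u1 u2)) (delta_mx j 0) (act M (compC h (wG2 u1 u2)) (xk k))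
  else 0.

Lemma rel2 d (h : HomC d d) (i : 'I_(nF F)) (f : HomC (cs i) d) v (m : Mob M d) :
  is_iso h -> tens_rel (elem (compC h f) v (act M h m) - elem f v m).
Proof. by move=> ih; right; exists h, i, f, v, m. Qed.

Lemma decomp d (w : Tsp F M d) :
  w = \sum_(p : idx F d) elem (tagged p).1 (delta_mx (tagged p).2 0) (w p).
Proof.
apply/ffunP => q; rewrite sum_ffunE (bigD1 q) //= big1 ?addr0.
  rewrite ffunE (bigD1 (tagged q).2) //= big1 ?addr0.
    rewrite mxE !eqxx /= scale1r; case: q => i [f j] /=; by rewrite eqxx.
  by move=> j nj; rewrite mxE (negbTE nj) scale0r.
move=> p npq; rewrite ffunE big1 // => j _; rewrite mxE.
case: eqP => [ej|_]; last by rewrite scale0r.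
rewrite ifF ?scaler0 //; apply/negP => /eqP eq; move: npq; rewrite eq ej; clear eq ej j.
by case: p => i [f j'] /=; rewrite eqxx.
Qed.


Lemma In_nth_ord (T : Type) (x0 x : T) (s : seq T) :
  List.In x s -> exists r : 'I_(size s), nth x0 s r = x.
Proof.
move=> hx.
have [n [hn e]] : exists n, (n < size s)%N /\ nth x0 s n = x.
  elim: s hx => [|q s IH] //= [->|/IH [n [hn e]]]; first by exists 0%N.
  by exists n.+1.
by exists (Ordinal hn).
Qed.

Lemma gen2 d (i : 'I_(nF F)) (j : 'I_(dims i)) (k : 'I_(size gens))
  (f : HomC (cs i) d) (g : HomC (ck k) d) :
  Gen (@tens_rel _ _ F M) avT yT (elem f (delta_mx j 0) (act M g (xk k))).
Proof.
have [p [f1 [f2 pb]]] := Hpb f g.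
have [c' [inc [s is_s]]] := Hreps (inhabits f1).
have [r er] := In_nth_ord (cs i) inc.
subst c'; have [t [ts st]] := is_s.
have pb' := pb_iso ts st pb.
right; exists (existT _ i (existT _ j (existT _ k (existT _ r (compC f1 t, compC f2 t))))).
have [h [h1 h2]] := Hw pb'.
rewrite /avT /yT /=; case: pickP => [h' _ | /(_ h) //]; split=> //.
have [s' [is' e]] := trans h h'.
rewrite -e -!Defs.compA h1 h2 act_comp; apply: inspan1; exact: rel2.
Qed.

Lemma part2 : stabilizes (@tens_rel _ _ F M) (fun c d f => @push _ _ F M c d f).
Proof.
have pB : forall c d (phi : HomC c d) (x z : Tsp F M c),
    push phi (x - z) = push phi x - push phi z.
  by move=> c d phi x z; rewrite -scaleN1r addrC push_lin scaleN1r addrC.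
apply: (@abstract_stab _ _ _ _ _ _ _ _ avT yT).
- move=> c d f a x z; exact: push_lin.
- move=> c d phi x [[i [f [g [v [m [ig ->]]]]]] | [h [i [f [v [m [ih ->]]]]]]];
    apply: inspan1; rewrite pB !push_elem.
    rewrite Defs.compA; left; exists i, (compC phi f), g, v, (act M phi m); by split.
  have [s [iss e]] := trans phi (compC phi h).
  rewrite Defs.compA -act_comp -e -Defs.compA act_comp; exact: rel2.
- move=> [i [j [k [r [u1 u2]]]]] c d /=; case: pickP => // h _ _ [f].
  by case: pickP => // /(_ (compC f h)).
- move=> [i [j [k [r [u1 u2]]]]] c d f /=; case: pickP => // h _ _.
  case: pickP => [h' _|/(_ (compC f h)) //].
  rewrite push_elem -act_comp.
  have [s [iss e]] := trans (compC f h) h'.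
  rewrite -e -!Defs.compA (act_comp s); apply: inspan1; exact: rel2.
- move=> d w; rewrite (decomp w); apply: inspan_sum => p _.
  have L := fun a (x z : Mob M d) => elem_lin (tagged p).1 (delta_mx (tagged p).2 0) a x z.
  apply: (inspan_map L) (M_span (w p)) => v [k [g ->]]; apply: inspan1; exact: gen2.
Qed.

End Concrete.

Theorem theoremD (R : realType) (C : category) (M : Cmodule (R[i]) C) :
  FI_type C -> fin_gen M ->
  @stabilizes _ C (Mob M) (@coinv_rel _ C M) (fun c d f => act M f) /\
  (forall F : freeData (R[i]) C,
     @stabilizes _ C (Tsp F M) (@tens_rel _ C F M) (fun c d f => @push _ C F M c d f)).
Proof.
move=> [mono [endo [trans [fin4 [pb wpo]]]]] [gens Hgen].
split; first exact: (part1 trans Hgen).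
move=> F.
pose Rp d := constructive_indefinite_description _ (fin4 d).
pose reps d := sval (Rp d).
have W : forall p c1 c2 (f1 : HomC p c1) (f2 : HomC p c2),
  {d : C & {g : (HomC c1 d * HomC c2 d)%type | forall z (h1 : HomC c1 z) (h2 : HomC c2 z),
     is_pullback f1 f2 h1 h2 -> exists h : HomC d z, compC h g.1 = h1 /\ compC h g.2 = h2}}.
  move=> p c1 c2 f1 f2.
  have [d Hd] := constructive_indefinite_description _ (wpo p c1 c2 f1 f2).
  have [g1 Hg1] := constructive_indefinite_description _ Hd.
  have [g2 [_ H]] := constructive_indefinite_description _ Hg1.
  exists d, (g1, g2) => z h1 h2 hp; have [h [[e1 e2] _]] := H z h1 h2 hp; by exists h.
apply: (@part2 _ _ M trans gens Hgen F reps _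
  (fun p c1 c2 f1 f2 => projT1 (W p c1 c2 f1 f2))
  (fun p c1 c2 f1 f2 => (proj1_sig (projT2 (W p c1 c2 f1 f2))).1)
  (fun p c1 c2 f1 f2 => (proj1_sig (projT2 (W p c1 c2 f1 f2))).2)).
- by move=> d c; exact: (proj2_sig (Rp d) c).
- move=> p c1 c2 f1 f2 z h1 h2 hp; exact: (proj2_sig (projT2 (W p c1 c2 f1 f2)) z h1 h2 hp).
- exact: pb.
Qed.
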